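(* Let $H$ be a commutative Hopf algebra over a field $k$ with counit $\varepsilon$, and let $B$ be a Rota-Baxter co-operator on $H$. Then $\varepsilon\circ B=\varepsilon$.
   Context: Sweedler notation $\Delta(x)=x_1\otimes x_2$, iterated as $x_1\otimes x_2\otimes x_3\otimes x_4$. A Rota-Baxter co-operator on a commutative Hopf algebra $(H,S)$ is an algebra map $B:H\to H$ such that for all $x\in H$: $B(x_1)\otimes B(x_2)=B(x)_1\,B\big(B(x)_2S(B(x)_4)\big)\otimes B(x)_3$, where $B(x)_1\otimes B(x)_2\otimes B(x)_3\otimes B(x)_4$ denotes the threefold iterated coproduct of $B(x)$. *)

(* Defs.v *)
(* Commutative Hopf algebras over a field, with elements of
   tensor powers represented by finite formal sums (sequences of pure tensors)
   and equality in the tensor power given by the universal property: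
   two formal sums are equal in H (x) H iff every bilinear map into every
   k-vector space takes the same value on them (similarly for H (x) H (x) H). *)
From HB Require Import structures.
From mathcomp Require Import all_boot all_order all_algebra.
Set Implicit Arguments. Unset Strict Implicit. Unset Printing Implicit Defensive.
Import Order.TTheory GRing.Theory Num.Theory.
Local Open Scope ring_scope.

Section Hopf.
Variables (k : fieldType) (H : comAlgType k).

Definition bilin (V : lmodType k) (phi : H -> H -> V) : Prop :=
  (forall a, linear (phi a)) /\ (forall b, linear (fun a => phi a b)).

Definition trilin (V : lmodType k) (phi : H -> H -> H -> V) : Prop :=
  [/\ forall a b, linear (phi a b),
      forall a c, linear (fun b => phi a b c) &
      forall b c, linear (fun a => phi a b c)].

Definition teq2 (s t : seq (H * H)) : Prop :=
  forall (V : lmodType k) (phi : H -> H -> V), bilin phi ->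
    \sum_(p <- s) phi p.1 p.2 = \sum_(p <- t) phi p.1 p.2.

Definition teq3 (s t : seq (H * H * H)) : Prop :=
  forall (V : lmodType k) (phi : H -> H -> H -> V), trilin phi ->
    \sum_(p <- s) phi p.1.1 p.1.2 p.2 = \sum_(p <- t) phi p.1.1 p.1.2 p.2.

Definition tscale2 (c : k) (s : seq (H * H)) : seq (H * H) :=
  [seq (c *: p.1, p.2) | p <- s].

Definition tmul2 (s t : seq (H * H)) : seq (H * H) :=
  [seq (p.1 * q.1, p.2 * q.2) | p <- s, q <- t].

Definition is_algmap (f : H -> H) : Prop :=
  linear f /\ (forall a b, f (a * b) = f a * f b) /\ f 1 = 1.

Definition is_hopf (cop : H -> seq (H * H)) (eps : H -> k) (ant : H -> H) : Prop :=
     (forall (c : k) (a b : H), teq2 (cop (c *: a + b)) (tscale2 c (cop a) ++ cop b))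
  /\ (forall a b : H, teq2 (cop (a * b)) (tmul2 (cop a) (cop b)))
  /\ teq2 (cop 1) [:: (1, 1)]
  /\ (forall a : H, teq3 [seq (p.1, q.1, q.2) | p <- cop a, q <- cop p.2]
                         [seq (q.1, q.2, p.2) | p <- cop a, q <- cop p.1])
  /\ (forall (c : k) (a b : H), eps (c *: a + b) = c * eps a + eps b)
  /\ (forall a b : H, eps (a * b) = eps a * eps b)
  /\ eps 1 = 1
  /\ (forall a : H, \sum_(p <- cop a) eps p.1 *: p.2 = a /\
                    \sum_(p <- cop a) eps p.2 *: p.1 = a)
  /\ linear ant
  /\ (forall a : H, \sum_(p <- cop a) ant p.1 * p.2 = eps a *: 1 /\
                    \sum_(p <- cop a) p.1 * ant p.2 = eps a *: 1).

(* threefold iterated coproduct: y_1 (x) y_2 (x) y_3 (x) y_4, as ((y1,y2),y3),y4 *)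
Definition cop3 (cop : H -> seq (H * H)) (y : H) : seq (H * H * H * H) :=
  flatten [seq [seq (p.1, q.1, r.1, r.2) | r <- cop q.2] | p <- cop y, q <- cop p.2].

(* Rota-Baxter co-operator:
   B(x_1) (x) B(x_2) = B(x)_1 B(B(x)_2 S(B(x)_4)) (x) B(x)_3 *)
Definition is_RB_cooperator (cop : H -> seq (H * H)) (ant : H -> H) (B : H -> H) : Prop :=
  is_algmap B /\
  forall x : H,
    teq2 [seq (B p.1, B p.2) | p <- cop x]
         [seq (u.1.1.1 * B (u.1.1.2 * ant u.2), u.1.2) | u <- cop3 cop (B x)].

End Hopf.

(* Main.v *)
Require Import Defs.
From HB Require Import structures.
From mathcomp Require Import all_boot all_order all_algebra.
Import GRing.Theory.
Local Open Scope ring_scope.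
Set Implicit Arguments.
Section S.
Variables (k : fieldType) (H : comAlgType k).
Lemma lin_sum (V W : lmodType k) (g : V -> W) : linear g ->
  forall (I : Type) (s : seq I) (F : I -> V), g (\sum_(i <- s) F i) = \sum_(i <- s) g (F i).
Proof.
move=> gl.
have g0 : g 0 = 0.
  by apply/(@addrI _ (g 0)); rewrite addr0 -{1}(scale1r (g 0)) -gl addr0 scale1r.
move=> I s F; elim: s => [|a s IH]; first by rewrite !big_nil.
by rewrite !big_cons -{1}(scale1r (F a)) gl scale1r IH.
Qed.
Lemma lin_scale (V W : lmodType k) (g : V -> W) : linear g -> forall c a, g (c *: a) = c *: g a.
Proof.
move=> gl c a.
have g0 : g 0 = 0.
  by apply/(@addrI _ (g 0)); rewrite addr0 -{1}(scale1r (g 0)) -gl addr0 scale1r.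
by rewrite -(addr0 (c *: a)) gl g0 addr0.
Qed.
Lemma lin_comp (U V W : lmodType k) (g : U -> V) (h : V -> W) : linear g -> linear h -> linear (h \o g).
Proof. by move=> gl hl c u v /=; rewrite gl hl. Qed.
Lemma lin_mulK (g : H -> k^o) (K : k) : linear g -> linear (fun a => (K * g a : k^o)).
Proof. by move=> gl c u v; rewrite gl /= mulrDr mulrCA. Qed.
Lemma lin_mulKr (g : H -> k^o) (K : k) : linear g -> linear (fun a => (g a * K : k^o)).
Proof. by move=> gl c u v; rewrite gl /= mulrDl scalerAl. Qed.
Lemma lin_mulH (g : H -> H) (K : H) : linear g -> linear (fun a => K * g a).
Proof. by move=> gl c u v; rewrite gl mulrDr scalerAr. Qed.
End S.

Theorem proposition3p2 (k : fieldType) (H : comAlgType k)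
    (cop : H -> seq (H * H)) (eps : H -> k) (ant : H -> H) (B : H -> H) :
  is_hopf cop eps ant -> is_RB_cooperator cop ant B ->
  forall x : H, eps (B x) = eps x.
Proof.
move=> [copL [copM [cop1 [coass [epsL [epsM [eps1 [counit [antL antax]]]]]]]]] [[BL [BM B1]] RB].
have epsl : linear (eps : H -> k^o) by move=> c u v; rewrite epsL.
pose f := fun a => (eps (B a) : k^o).
have fl : linear f by move=> c u v; rewrite /f BL epsl.
have fM : forall a b, f (a * b) = f a * f b by move=> a b; rewrite /f BM epsM.
have f1 : f 1 = 1 by rewrite /f B1 eps1.
have fS : linear (f \o ant) by move=> c u v; rewrite /= antL fl.
have hA : forall y, \sum_(p <- cop y) f p.1 * f p.2 = f y.
  move=> y.
  have bl : bilin (fun a b : H => (eps a * eps b : k^o)).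
    split=> a; [exact: lin_mulK | exact: lin_mulKr].
  have := RB y _ _ bl; rewrite big_map /= => ->.
  rewrite /cop3 big_map big_flatten /= big_allpairs_dep /=.
  have inner : forall (q1 z : H), \sum_(r <- cop z) (f (q1 * ant r.2) * eps r.1 : k)
      = f (q1 * ant z).
    move=> q1 z.
    have gl : linear (fun a => f (q1 * ant a)).
      by move=> c u v; rewrite antL mulrDr -scalerAr fl.
    rewrite -{2}(proj1 (counit z)) (lin_sum gl).
    by apply: eq_bigr => r _; rewrite (lin_scale gl) /= mulrC.
  transitivity (\sum_(p <- cop (B y)) eps p.1 * eps p.2).
    apply: eq_bigr => p _.
    transitivity (\sum_(q <- cop p.2) eps p.1 * f (q.1 * ant q.2)).
      apply: eq_bigr => q _; rewrite big_map /=.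
      rewrite -inner big_distrr /=; apply: eq_bigr => r _.
      by rewrite epsM -/(f _) mulrA.
    rewrite -big_distrr /=; congr (_ * _).
    rewrite -(lin_sum fl) /=.
    have -> : \sum_(q <- cop p.2) q.1 * ant q.2 = eps p.2 *: 1 by exact: (proj2 (antax p.2)).
    by rewrite (lin_scale fl) f1 /=; exact: mulr1.
  have hh := proj1 (counit (B y)).
  rewrite /f -[X in _ = eps X]hh (lin_sum epsl); apply: eq_bigr => p _.
  by rewrite (lin_scale epsl).
have hB : forall y, \sum_(p <- cop y) f (ant p.1) * f p.2 = eps y.
  move=> y.
  under eq_bigr do rewrite -fM.
  rewrite -(lin_sum fl) (proj1 (antax y)).
  by rewrite (lin_scale fl) f1; exact: mulr1.
move=> x.
have tl : trilin (fun a b c : H => (f (ant a) * f b * f c : k^o)).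
  split.
  - move=> a b; exact: lin_mulK.
  - move=> a c; apply: lin_mulKr; exact: lin_mulK.
  - move=> b c; apply: lin_mulKr; apply: lin_mulKr; exact: fS.
have := coass x _ _ tl; rewrite !big_allpairs_dep /=.
have -> : \sum_(p <- cop x) \sum_(q <- cop p.2) (f (ant p.1) * f q.1 * f q.2 : k)
   = eps x.
  rewrite -hB; apply: eq_bigr => p _.
  by rewrite -[f p.2]hA big_distrr /=; apply: eq_bigr => q _; rewrite mulrA.
move=> ->.
transitivity (\sum_(p <- cop x) eps p.1 * f p.2).
  rewrite -/(f x);  rewrite -{1}(proj1 (counit x)) (lin_sum fl); apply: eq_bigr => p _.
  by rewrite (lin_scale fl).
apply: eq_bigr => p _; rewrite -hB big_distrl /=.
by apply: eq_bigr.
Qed.
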